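(* Let $\mathcal A=\{0,1\}^d\subset\mathbb R^d$ be the vertex set of the unit cube. Then $\mathrm{PWidth}(\mathcal A)=1/\sqrt d$.
   Context: Euclidean norm and inner product. For a finite set $\mathcal B\subseteq\mathbb R^d$ and $x\in\mathrm{conv}(\mathcal B)$, $\mathcal S_x(\mathcal B)$ is the family of subsets $S\subseteq\mathcal B$ such that $x$ is a proper convex combination of all elements of $S$ (all coefficients positive). For $r\ne0$, $\mathrm{PdirW}(\mathcal B,r,x):=\min_{S\in\mathcal S_x(\mathcal B)}\max_{s\in\mathcal B,\,v\in S}\langle r/\|r\|,s-v\rangle$. The pyramidal width is $\mathrm{PWidth}(\mathcal A):=\inf\{\mathrm{PdirW}(\mathcal K\cap\mathcal A,r,x)\}$ over all nonempty faces $\mathcal K$ of $\mathrm{conv}(\mathcal A)$ (including $\mathrm{conv}(\mathcal A)$ itself), all $x\in\mathcal K$, and all $r\in\mathrm{cone}(\mathcal K-x)\setminus\{0\}$, where $\mathrm{cone}(\mathcal K-x)=\{\sum_i\lambda_i(y_i-x):\lambda_i\ge0,\ y_i\in\mathcal K\}$. *)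

(* Defs.v *)
From HB Require Import structures.
From mathcomp Require Import all_boot all_order all_algebra.
Set Implicit Arguments. Unset Strict Implicit. Unset Printing Implicit Defensive.
Import Order.TTheory GRing.Theory Num.Theory.
Local Open Scope ring_scope.

Section PyramidalWidth.
Variables (R : rcfType) (d : nat).
Notation vec := 'rV[R]_d.

Definition dot (u v : vec) : R := \sum_(j < d) u 0 j * v 0 j.
Definition enorm (u : vec) : R := Num.sqrt (dot u u).

(* A finite point set is given as an injective family a : I -> R^d over a finType I;
   subsets of the point set are subsets of I. *)
Variables (I : finType) (a : I -> vec).

Definition in_conv (T : {set I}) (x : vec) : Prop :=
  exists w : I -> R, (forall i, i \in T -> 0 <= w i) /\
    \sum_(i in T) w i = 1 /\ x = \sum_(i in T) w i *: a i.

Definition proper_comb (S : {set I}) (x : vec) : Prop :=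
  exists w : I -> R, (forall i, i \in S -> 0 < w i) /\
    \sum_(i in S) w i = 1 /\ x = \sum_(i in S) w i *: a i.

(* max_{s in T, v in S} < r/|r|, s - v >.  Using 0 as neutral element is harmless:
   for nonempty S included in T the true maximum is >= 0 (take s = v). *)
Definition dirw (T : {set I}) (r : vec) (S : {set I}) : R :=
  \big[Num.max/0]_(s in T) \big[Num.max/0]_(v in S)
     dot ((enorm r)^-1 *: r) (a s - a v).

Definition PdirW_is (T : {set I}) (r x : vec) (w : R) : Prop :=
  (exists S : {set I}, S \subset T /\ proper_comb S x /\ w = dirw T r S) /\
  (forall S : {set I}, S \subset T -> proper_comb S x -> w <= dirw T r S).

(* Nonempty faces of conv(A): K = conv(A) ∩ {y | <c,y> = m} where <c,a> <= m on A
   (c = 0, m = 0 gives conv(A) itself). *)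
Definition face_ok (c : vec) (m : R) : Prop :=
  (forall i, dot c (a i) <= m) /\ (exists y, in_conv setT y /\ dot c y = m).
Definition in_face (c : vec) (m : R) (y : vec) : Prop :=
  in_conv setT y /\ dot c y = m.
Definition face_pts (c : vec) (m : R) : {set I} := [set i | dot c (a i) == m].

Definition in_cone (K : vec -> Prop) (x r : vec) : Prop :=
  exists (n : nat) (lam : 'I_n -> R) (y : 'I_n -> vec),
    (forall k, 0 <= lam k) /\ (forall k, K (y k)) /\
    r = \sum_(k < n) lam k *: (y k - x).

(* the set whose infimum is PWidth(A) *)
Definition PWidth_val (w : R) : Prop :=
  exists (c : vec) (m : R) (x r : vec),
    face_ok c m /\ in_face c m x /\ in_cone (in_face c m) x r /\ r != 0 /\
    PdirW_is (face_pts c m) r x w.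

End PyramidalWidth.

Definition is_inf (R : realFieldType) (P : R -> Prop) (z : R) : Prop :=
  (forall w, P w -> z <= w) /\
  (forall z', (forall w, P w -> z' <= w) -> z' <= z).

Definition cube_pt (R : rcfType) (d : nat) (f : {ffun 'I_d -> bool}) : 'rV[R]_d :=
  \row_(j < d) (f j)%:R.

(* Main.v *)
Require Import Defs.
From mathcomp Require Import all_boot all_order all_algebra.
From mathcomp Require Import ring lra.
Import Order.TTheory GRing.Theory Num.Theory.
Local Open Scope ring_scope.
Set Implicit Arguments. Unset Strict Implicit.

Section Cube.
Variables (R : rcfType) (d : nat).
Notation vec := 'rV[R]_d.
Notation cp := (@cube_pt R d).
Notation B := {ffun 'I_d -> bool}.

Lemma cpE (f : B) j : cp f 0 j = (f j)%:R.
Proof. by rewrite /cube_pt mxE. Qed.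

Lemma dotZl k (u v : vec) : dot (k *: u) v = k * dot u v.
Proof. by rewrite /dot mulr_sumr; apply: eq_bigr => j _; rewrite mxE mulrA. Qed.

Lemma dotBr (u v w : vec) : dot u (v - w) = dot u v - dot u w.
Proof. by rewrite /dot -sumrB; apply: eq_bigr => j _; rewrite !mxE mulrBr. Qed.

Lemma coord_sum (I : finType) (P : pred I) (w : I -> R) (b : I -> vec) j :
  (\sum_(i | P i) w i *: b i) 0 j = \sum_(i | P i) w i * b i 0 j.
Proof. by rewrite summxE; apply: eq_bigr => i _; rewrite mxE. Qed.

Lemma dot_sum (I : finType) (P : pred I) (w : I -> R) (b : I -> vec) u :
  dot u (\sum_(i | P i) w i *: b i) = \sum_(i | P i) w i * dot u (b i).
Proof.
rewrite /dot; under eq_bigr do rewrite coord_sum mulr_sumr.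
rewrite exchange_big; apply: eq_bigr => i _; rewrite mulr_sumr.
by apply: eq_bigr => j _; rewrite mulrCA.
Qed.

Definition upd (f : B) j b : B := [ffun k => if k == j then b else f k].

Lemma dot_upd u (f : B) j b :
  dot u (cp (upd f j b)) = dot u (cp f) + u 0 j * (b%:R - (f j)%:R).
Proof.
rewrite /dot (bigD1 j) //= [in RHS](bigD1 j) //= !cpE ffunE eqxx.
rewrite (eq_bigr (fun k => u 0 k * cp f 0 k)); last first.
  by move=> k /negbTE ne; rewrite !cpE ffunE ne.
ring.
Qed.

Lemma conv_coord (y : vec) j : in_conv cp setT y -> 0 <= y 0 j <= 1.
Proof.
case=> w [w0 [w1 ->]]; rewrite coord_sum; apply/andP; split.
  by apply: sumr_ge0 => i _; rewrite cpE mulr_ge0 ?w0 ?inE.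
rewrite -w1; apply: ler_sum => i _; rewrite cpE.
by case: (i j); rewrite ?mulr1 // mulr0 w0 ?inE.
Qed.

Lemma face_supp c m (y : vec) : face_ok cp c m -> in_face cp c m y ->
  exists w : B -> R, (forall i, 0 <= w i) /\ \sum_(i in setT) w i = 1 /\
    y = \sum_(i in setT) w i *: cp i /\
    (forall i, w i != 0 -> dot c (cp i) = m).
Proof.
move=> [fo _] [[w [w0 [w1 ey]]] ec].
have w0' : forall i, 0 <= w i by move=> i; apply: w0; rewrite inE.
exists w; split=> //; split=> //; split=> // i nz.
have h : \sum_(i in setT) w i * (m - dot c (cp i)) = 0.
  under eq_bigr do rewrite mulrBr.
  by rewrite sumrB -mulr_suml w1 mul1r -dot_sum -ey ec subrr.
have hp : forall k, k \in setT -> 0 <= w k * (m - dot c (cp k)).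
  by move=> k _; rewrite mulr_ge0 // subr_ge0.
move: (psumr_eq0P hp h (in_setT i)) => /eqP.
by rewrite mulf_eq0 (negbTE nz) /= subr_eq0 => /eqP ->.
Qed.

Lemma vert_neg c m (i : B) j : face_ok cp c m -> dot c (cp i) = m ->
  c 0 j < 0 -> i j = false.
Proof.
move=> [fo _] ei cj; case ij: (i j) => //; have h := fo (upd i j false).
rewrite dot_upd ei ij /= in h; exfalso; lra.
Qed.

Lemma vert_pos c m (i : B) j : face_ok cp c m -> dot c (cp i) = m ->
  0 < c 0 j -> i j = true.
Proof.
move=> [fo _] ei cj; case ij: (i j) => //; have h := fo (upd i j true).
rewrite dot_upd ei ij /= in h; exfalso; lra.
Qed.

Lemma face_coord0 c m (y : vec) j : face_ok cp c m -> in_face cp c m y ->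
  c 0 j < 0 -> y 0 j = 0.
Proof.
move=> fo fy cj; have [w [w0 [w1 [ey hw]]]] := face_supp fo fy.
rewrite ey coord_sum big1 // => i _; rewrite cpE.
have [->|nz] := eqVneq (w i) 0; first by rewrite mul0r.
by rewrite (vert_neg fo (hw i nz) cj) mulr0.
Qed.

Lemma face_coord1 c m (y : vec) j : face_ok cp c m -> in_face cp c m y ->
  0 < c 0 j -> y 0 j = 1.
Proof.
move=> fo fy cj; have [w [w0 [w1 [ey hw]]]] := face_supp fo fy.
rewrite ey coord_sum -w1; apply: eq_bigr => i _; rewrite cpE.
have [->|nz] := eqVneq (w i) 0; first by rewrite mul0r.
by rewrite (vert_pos fo (hw i nz) cj) mulr1.
Qed.

Lemma cone_le (K : vec -> Prop) x r j : in_cone K x r ->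
  (forall y, K y -> y 0 j <= x 0 j) -> r 0 j <= 0.
Proof.
case=> n [lam [y [l0 [Ky ->]]]] h; rewrite coord_sum.
apply: sumr_le0 => k _; rewrite !mxE.
by apply: mulr_ge0_le0 => //; rewrite subr_le0 h.
Qed.

Lemma cone_ge (K : vec -> Prop) x r j : in_cone K x r ->
  (forall y, K y -> x 0 j <= y 0 j) -> 0 <= r 0 j.
Proof.
case=> n [lam [y [l0 [Ky ->]]]] h; rewrite coord_sum.
apply: sumr_ge0 => k _; rewrite !mxE.
by apply: mulr_ge0 => //; rewrite subr_ge0 h.
Qed.

Lemma exists_v S (x : vec) j (b : bool) : proper_comb cp S x ->
  x 0 j != b%:R -> exists2 v, v \in S & v j = ~~ b.
Proof.
case=> w [w0 [w1 ex]] ne.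
case: (pickP [pred v in S | v j == ~~ b]) => [v /andP[vS /eqP vj] | none].
  by exists v.
exfalso; move/eqP: ne; apply; rewrite ex coord_sum.
transitivity (\sum_(i in S) w i * b%:R); last by rewrite -mulr_suml w1 mul1r.
apply: eq_bigr => i iS; rewrite cpE; congr (_ * _).
by move: (none i); rewrite /= iS /=; case: (i j); case: (b).
Qed.

Lemma sq_norm (z : R) : z * z = `|z| * `|z|.
Proof. by rewrite -normrM ger0_norm // -expr2 sqr_ge0. Qed.

Lemma lower c m (x r : vec) (S : {set B}) : face_ok cp c m -> in_face cp c m x ->
  in_cone (in_face cp c m) x r -> r != 0 -> S \subset face_pts cp c m ->
  proper_comb cp S x -> (Num.sqrt (d%:R : R))^-1 <= dirw cp (face_pts cp c m) r S.
Proof.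
move=> fo fx cr rn0 sub pc.
have [j0 rj0] : exists j, r 0 j != 0.
  case: (pickP (fun j => r 0 j != 0)) => [j hj | none]; first by exists j.
  case/eqP: rn0; apply/rowP => k; rewrite mxE.
  by move: (none k) => /= /negbFE/eqP.
case: (@arg_maxP _ _ _ j0 predT (fun k => `|r 0 k|) isT) => j _ jmax.
have rjp : 0 < `|r 0 j|.
  by apply: lt_le_trans (jmax j0 isT); rewrite normr_gt0.
have rj : r 0 j != 0 by rewrite -normr_gt0.
have sd : 0 < Num.sqrt (d%:R : R).
  rewrite sqrtr_gt0 ltr0n; case: d j {j0 jmax rj0 rj rjp} => [[]|] //.
have en_pos : 0 < enorm r.
  rewrite /enorm sqrtr_gt0 /dot (bigD1 j) //= sq_norm.
  apply: ltr_wpDr; last by rewrite mulr_gt0.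
  by apply: sumr_ge0 => k _; rewrite sq_norm mulr_ge0.
have en_le : enorm r <= Num.sqrt (d%:R : R) * `|r 0 j|.
  have h : dot r r <= d%:R * (`|r 0 j| * `|r 0 j|).
    rewrite /dot; apply: (@le_trans _ _ (\sum_(k < d) `|r 0 j| * `|r 0 j|)).
      by apply: ler_sum => k _; rewrite sq_norm; apply: ler_pM => //; exact: jmax.
    by rewrite sumr_const card_ord mulr_natl.
  have -> : Num.sqrt (d%:R : R) * `|r 0 j| = Num.sqrt (d%:R * (`|r 0 j| * `|r 0 j|)).
    by rewrite sqrtrM ?ler0n // -expr2 sqrtr_sqr normr_id.
  rewrite /enorm ler_sqrt //; apply: mulr_ge0 => //; exact: mulr_ge0.
suff [s [v [sT [vS E]]]] : exists s v, s \in face_pts cp c m /\ v \in S /\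
    dot r (cp s - cp v) = `|r 0 j|.
  rewrite /dirw; apply: le_trans (le_bigmax_cond _ _ sT).
  apply: le_trans (le_bigmax_cond _ _ vS).
  rewrite dotZl E [X in _ <= X]mulrC -(ler_pM2r en_pos) -mulrA mulVf ?gt_eqF // mulr1.
  apply: le_trans (ler_wpM2l _ en_le) _; first by rewrite invr_ge0 ltW.
  by rewrite mulrA mulVf ?gt_eqF // mul1r.
case: (ltrgtP (r 0 j) 0) => [rneg|rpos|/eqP]; last by rewrite (negbTE rj).
- have hx : x 0 j != false%:R.
    apply/eqP => x0; have := cone_ge cr (j := j); rewrite x0.
    have h : forall y, in_face cp c m y -> 0 <= y 0 j.
      by move=> y [/(conv_coord j)/andP[]].
    by move=> /(_ h); rewrite leNgt rneg.
  have [v vS vj] := exists_v pc hx; rewrite /= in vj.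
  have := subsetP sub v vS; rewrite inE => /eqP ev.
  have cj0 : c 0 j = 0.
    case: (ltrgtP (c 0 j) 0) => [cn|cp0|//].
      have h := fo.1 (upd v j false); rewrite dot_upd ev vj /= in h; lra.
    have := cone_ge cr (j := j).
    have h : forall y, in_face cp c m y -> x 0 j <= y 0 j.
      by move=> y fy; rewrite (face_coord1 fo fy cp0) (face_coord1 fo fx cp0).
    by move=> /(_ h); rewrite leNgt rneg.
  exists (upd v j false), v; split; first by rewrite inE dot_upd ev cj0 mul0r addr0.
  split=> //; rewrite dotBr dot_upd vj ltr0_norm //=; ring.
- have hx : x 0 j != true%:R.
    apply/eqP => x1; have := cone_le cr (j := j); rewrite x1.
    have h : forall y, in_face cp c m y -> y 0 j <= 1.
      by move=> y [/(conv_coord j)/andP[]].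
    by move=> /(_ h); rewrite leNgt rpos.
  have [v vS vj] := exists_v pc hx; rewrite /= in vj.
  have := subsetP sub v vS; rewrite inE => /eqP ev.
  have cj0 : c 0 j = 0.
    case: (ltrgtP (c 0 j) 0) => [cn|cp0|//].
      have := cone_le cr (j := j).
      have h : forall y, in_face cp c m y -> y 0 j <= x 0 j.
        by move=> y fy; rewrite (face_coord0 fo fy cn) (face_coord0 fo fx cn).
      by move=> /(_ h); rewrite leNgt rpos.
    have h := fo.1 (upd v j true); rewrite dot_upd ev vj /= in h; lra.
  exists (upd v j true), v; split; first by rewrite inE dot_upd ev cj0 mul0r addr0.
  split=> //; rewrite dotBr dot_upd vj gtr0_norm //=; ring.
Qed.
Lemma dot0l (u : vec) : dot 0 u = 0.
Proof. by rewrite /dot big1 // => k _; rewrite mxE mul0r. Qed.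

Lemma sum_in_setT (V : zmodType) (S : {set B}) (F : B -> V) :
  \sum_(i in setT) (if i \in S then F i else 0) = \sum_(i in S) F i.
Proof.
rewrite -big_mkcondr; apply: eq_bigl => i; by rewrite inE.
Qed.

Lemma comb_conv (S : {set B}) (x : vec) : proper_comb cp S x -> in_conv cp setT x.
Proof.
case=> w [w0 [w1 ex]]; exists (fun i => if i \in S then w i else 0).
split; first by move=> i _; case: ifP => // iS; apply: ltW; apply: w0.
split; first by rewrite sum_in_setT.
rewrite ex -sum_in_setT; apply: eq_bigr => i _; case: ifP => // _.
by rewrite scale0r.
Qed.

Definition ev (j : 'I_d) : B := [ffun k => k == j].
Definition f0 : B := [ffun _ => false].

Lemma ev_inj : injective ev.
Proof. by move=> j k /ffunP/(_ j); rewrite !ffunE eqxx => /esym/eqP. Qed.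

Definition Sw : {set B} := [set ev j | j : 'I_d].
Definition xw : vec := \sum_(i in Sw) (d%:R^-1) *: cp i.
Definition rw : vec := d%:R *: (cp f0 - xw).

Lemma xw_coord j : xw 0 j = d%:R^-1.
Proof.
rewrite /xw coord_sum big_imset /=; last by move=> a b _ _; exact: ev_inj.
rewrite (bigD1 j) //= cpE ffunE eqxx mulr1 big1 ?addr0 //.
by move=> k kj; rewrite cpE ffunE eq_sym (negbTE kj) mulr0.
Qed.

Lemma sum_ev j : \sum_(k < d) cp (ev j) 0 k = 1.
Proof.
rewrite (bigD1 j) //= cpE ffunE eqxx big1 ?addr0 //.
by move=> k kj; rewrite cpE ffunE (negbTE kj).
Qed.

Hypothesis hd : (0 < d)%N.

Lemma rw_coord j : rw 0 j = -1.
Proof.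
rewrite !mxE ffunE /= mulr0n xw_coord sub0r mulrN mulfV //.
by rewrite pnatr_eq0 -lt0n.
Qed.

Lemma dot_rw u : dot rw u = - \sum_(k < d) u 0 k.
Proof. by rewrite /dot -sumrN; apply: eq_bigr => k _; rewrite rw_coord mulN1r. Qed.

Lemma enorm_rw : enorm rw = Num.sqrt (d%:R : R).
Proof.
rewrite /enorm dot_rw; under eq_bigr do rewrite rw_coord.
by rewrite sumr_const card_ord mulNrn opprK.
Qed.

Lemma dirw_w_le T : dirw cp T rw Sw <= (Num.sqrt (d%:R : R))^-1.
Proof.
have c0 : 0 <= (Num.sqrt (d%:R : R))^-1 by rewrite invr_ge0 sqrtr_ge0.
rewrite /dirw; apply: (big_ind (fun z => z <= _)) => // [a b ha hb|s _].
  by rewrite ge_max ha hb.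
apply: (big_ind (fun z => z <= _)) => // [a b ha hb|v].
  by rewrite ge_max ha hb.
case/imsetP => j _ ->.
rewrite dotZl enorm_rw dotBr !dot_rw sum_ev -[X in _ <= X]mulr1.
apply: ler_wpM2l => //.
have : 0 <= \sum_(k < d) cp s 0 k by apply: sumr_ge0 => k _; rewrite cpE ler0n.
lra.
Qed.

Lemma pc_w : proper_comb cp Sw xw.
Proof.
exists (fun _ => d%:R^-1); split; first by move=> i _; rewrite invr_gt0 ltr0n.
split=> //; rewrite sumr_const card_imset; last exact: ev_inj.
by rewrite card_ord -(mulr_natr (d%:R^-1) d) mulVf // pnatr_eq0 -lt0n.
Qed.
End Cube.

Theorem lemma1 (R : rcfType) (d : nat) (hd : (0 < d)%N) :
  is_inf (PWidth_val (@cube_pt R d)) (Num.sqrt (d%:R : R))^-1.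
Proof.
have rn : rw R d != 0.
  apply/eqP => h; have := @rw_coord R d hd (Ordinal hd); rewrite h mxE => /eqP.
  by rewrite eq_sym oppr_eq0 oner_eq0.
split.
  move=> w [c [m [x [r [fo [fx [cr [rn' [[S [sub [pc ->]]] _]]]]]]]]].
  exact: (lower fo fx cr rn' sub pc).
move=> z hz; apply: hz.
have fx : in_face (@cube_pt R d) 0 0 (xw R d).
  by split; [apply: comb_conv; apply: pc_w | rewrite dot0l].
have fo : face_ok (@cube_pt R d) 0 0.
  by split; [move=> i; rewrite dot0l | exists (xw R d); case: fx].
have cr : in_cone (in_face (@cube_pt R d) 0 0) (xw R d) (rw R d).
  exists 1%N, (fun _ => d%:R), (fun _ => cube_pt R (f0 d)); split.
    by move=> _; rewrite ler0n.
  split; last by rewrite big_ord1.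
  move=> _; split; last by rewrite dot0l.
  apply: (@comb_conv R d [set f0 d]); exists (fun _ => 1); split=> //.
  by rewrite !big_set1 scale1r.
exists 0, 0, (xw R d), (rw R d).
split; first exact: fo. split; first exact: fx.
split; first exact: cr. split; first exact: rn.
split; last by move=> S sub pc; apply: (lower fo fx cr rn).
exists (Sw d); split.
  by apply/subsetP => i _; rewrite inE dot0l.
split; first exact: pc_w.
apply/eqP; rewrite eq_le dirw_w_le // (lower fo fx cr rn) //.
  by apply/subsetP => i _; rewrite inE dot0l.
exact: pc_w.
Qed.
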